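(* For every $3\times 3$ bimatrix game $(A,B)$: if $(A,B)$ has a unique Nash equilibrium and it lies in the interior of $\Sigma_A\times\Sigma_B$, then the transition diagram of $(A,B)$ has no dominated row or column, i.e. for all $\{i,i',i''\}=\{j,j',j''\}=\{1,2,3\}$, $(i,j)\to(i',j)$ and $(i,j')\to(i',j')$ imply $(i',j'')\to(i,j'')$, and $(i,j)\to(i,j')$ and $(i',j)\to(i',j')$ imply $(i'',j')\to(i'',j)$.
   Context: $\Sigma_A$ is the set of probability row vectors and $\Sigma_B$ the set of probability column vectors in $\mathbb{R}^3$. For $A=(a_{ij})$, $B=(b_{ij})\in\mathbb{R}^{3\times3}$, $\mathrm{BR}_A(q)=\operatorname{argmax}_{p\in\Sigma_A} pAq$, $\mathrm{BR}_B(p)=\operatorname{argmax}_{q\in\Sigma_B} pBq$; a Nash equilibrium is $(\bar p,\bar q)$ with $\bar p\in\mathrm{BR}_A(\bar q)$, $\bar q\in \mathrm{BR}_B(\bar p)$. The transition relation on cells $(i,j)$, $i,j\in\{1,2,3\}$, is: for $i\neq i'$, $(i,j)\to(i',j)$ iff $a_{i'j}\ge a_{ij}$; for $j\neq j'$, $(i,j)\to(i,j')$ iff $b_{ij'}\ge b_{ij}$. *)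

(* Defs.v *)
From HB Require Import structures.
From mathcomp Require Import all_boot all_order all_algebra.
Set Implicit Arguments. Unset Strict Implicit. Unset Printing Implicit Defensive.
Import Order.TTheory GRing.Theory Num.Theory.
Local Open Scope ring_scope.

Section Game.
Variable R : realFieldType.

Definition SigmaA (p : 'rV[R]_3) : Prop :=
  (forall j, 0 <= p 0 j) /\ \sum_(j < 3) p 0 j = 1.
Definition SigmaB (q : 'cV[R]_3) : Prop :=
  (forall i, 0 <= q i 0) /\ \sum_(i < 3) q i 0 = 1.

Definition payoff (p : 'rV[R]_3) (M : 'M[R]_3) (q : 'cV[R]_3) : R :=
  (p *m M *m q) 0 0.

Definition BR_A (A : 'M[R]_3) (q : 'cV[R]_3) (p : 'rV[R]_3) : Prop :=
  SigmaA p /\ forall p', SigmaA p' -> payoff p' A q <= payoff p A q.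
Definition BR_B (B : 'M[R]_3) (p : 'rV[R]_3) (q : 'cV[R]_3) : Prop :=
  SigmaB q /\ forall q', SigmaB q' -> payoff p B q' <= payoff p B q.

Definition nash (A B : 'M[R]_3) (p : 'rV[R]_3) (q : 'cV[R]_3) : Prop :=
  BR_A A q p /\ BR_B B p q.

Definition interior_profile (p : 'rV[R]_3) (q : 'cV[R]_3) : Prop :=
  (forall j, 0 < p 0 j) /\ (forall i, 0 < q i 0).

Definition unique_interior_nash (A B : 'M[R]_3) : Prop :=
  exists p q, nash A B p q /\ interior_profile p q /\
    forall p' q', nash A B p' q' -> p' = p /\ q' = q.

Definition trans (A B : 'M[R]_3) (c d : 'I_3 * 'I_3) : Prop :=
  (c.2 = d.2 /\ c.1 <> d.1 /\ A c.1 c.2 <= A d.1 d.2) \/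
  (c.1 = d.1 /\ c.2 <> d.2 /\ B c.1 c.2 <= B d.1 d.2).

Definition no_dominated (A B : 'M[R]_3) : Prop :=
  forall i i' i'' j j' j'' : 'I_3,
    i != i' -> i != i'' -> i' != i'' ->
    j != j' -> j != j'' -> j' != j'' ->
    (trans A B (i, j) (i', j) -> trans A B (i, j') (i', j') ->
       trans A B (i', j'') (i, j'')) /\
    (trans A B (i, j) (i, j') -> trans A B (i', j) (i', j') ->
       trans A B (i'', j') (i'', j)).

End Game.

(* Main.v *)
Require Import Defs.
From mathcomp Require Import all_boot all_order all_algebra.
Import Order.TTheory GRing.Theory Num.Theory.

Local Open Scope ring_scope.

Lemma improve (R : realFieldType) (x r : 'I_3 -> R) (i i' : 'I_3) :
  (forall k, 0 <= x k) -> \sum_k x k = 1 -> 0 < x i -> r i < r i' ->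
  exists y : 'I_3 -> R, (forall k, 0 <= y k) /\ \sum_k y k = 1 /\
     \sum_k x k * r k < \sum_k y k * r k.
Proof.
move=> x0 x1 xi rii.
have nii : i' != i by apply/eqP=> E; move: rii; rewrite E ltxx.
pose d k : R := (k == i')%:R - (k == i)%:R.
have sd : forall F : 'I_3 -> R, \sum_k d k * F k = F i' - F i.
  move=> F; rewrite /d.
  under eq_bigr do rewrite mulrBl.
  rewrite sumrB (bigD1 i') //= eqxx mul1r big1 ?addr0; last first.
    by move=> a /negPf ->; rewrite mul0r.
  rewrite (bigD1 i) //= eqxx mul1r big1 ?addr0 //.
  by move=> a /negPf ->; rewrite mul0r.
exists (fun k => x k + x i * d k); split; [|split].
- move=> k; rewrite /d; case: (eqVneq k i) => [->|ki].
    rewrite eq_sym (negPf nii).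
    have -> : ((false:nat)%:R - (true:nat)%:R : R) = -1 by rewrite /= sub0r.
    by rewrite mulrN1 subrr.
  case: (k == i').
    have -> : ((true:nat)%:R - (false:nat)%:R : R) = 1 by rewrite /= subr0.
    by rewrite mulr1 addr_ge0 // ltW.
  have -> : ((false:nat)%:R - (false:nat)%:R : R) = 0 by rewrite subrr.
  by rewrite mulr0 addr0.
- rewrite big_split /= -mulr_sumr.
  have -> : \sum_k d k = 0.
    by rewrite -[RHS](subrr (1:R)) -(sd (fun _ => 1)); apply: eq_bigr => k _; rewrite mulr1.
  by rewrite mulr0 addr0.
- under [X in _ < X]eq_bigr do rewrite mulrDl -mulrA.
  rewrite big_split /= -mulr_sumr sd ltrDl mulr_gt0 // subr_gt0 //.
Qed.

Lemma payoffA (R : realFieldType) (p : 'rV[R]_3) M q :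
  payoff p M q = \sum_a p 0 a * (\sum_b M a b * q b 0).
Proof.
rewrite /payoff mxE.
under eq_bigr do rewrite mxE big_distrl /=.
rewrite exchange_big /=; apply: eq_bigr => a _.
by rewrite big_distrr /=; apply: eq_bigr => b _; rewrite mulrA.
Qed.

Lemma payoffB (R : realFieldType) (p : 'rV[R]_3) M q :
  payoff p M q = \sum_b q b 0 * (\sum_a p 0 a * M a b).
Proof.
by rewrite /payoff mxE; apply: eq_bigr => b _; rewrite mxE mulrC.
Qed.

Lemma cover3 (j j' j'' b : 'I_3) : j != j' -> j != j'' -> j' != j'' ->
  [|| b == j, b == j' | b == j''].
Proof.
by case: j => [[|[|[|?]]] ?] //; case: j' => [[|[|[|?]]] ?] //;
   case: j'' => [[|[|[|?]]] ?] //; case: b => [[|[|[|?]]] ?].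
Qed.

Lemma dom_lt (R : realFieldType) (w v c : 'I_3 -> R) k0 :
  (forall k, w k <= v k) -> w k0 < v k0 -> (forall k, 0 <= c k) -> 0 < c k0 ->
  \sum_k w k * c k < \sum_k v k * c k.
Proof.
move=> le lt c0 ck; rewrite -subr_gt0 -sumrB (bigD1 k0) //=.
apply: ltr_wpDr.
  by apply: sumr_ge0 => k _; rewrite -mulrBl mulr_ge0 // subr_ge0.
by rewrite -mulrBl mulr_gt0 // subr_gt0.
Qed.

Theorem mainTheorem2 (R : realFieldType) (A B : 'M[R]_3) :
  unique_interior_nash A B -> no_dominated A B.
Proof.
move=> [p [q [[[[p0 p1] BRp] [[q0 q1] BRq]] [[pi qi] _]]]].
move=> i i' i'' j j' j'' ii' ii'' i'i'' jj' jj'' j'j''; split.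
- move=> [[_ [_ /= T1]]|[/= E _]]; last by move: ii'; rewrite E eqxx.
  move=> [[_ [_ /= T2]]|[/= E _]]; last by move: ii'; rewrite E eqxx.
  left; split => //; split; first by apply/eqP; rewrite eq_sym.
  rewrite /= leNgt; apply/negP => T3.
  have H : \sum_b A i b * q b 0 < \sum_b A i' b * q b 0.
    apply: (@dom_lt R (fun b => A i b) (fun b => A i' b) (fun b => q b 0) j'') => //.
    move=> b; case/or3P: (cover3 _ _ _ b jj' jj'' j'j'') => /eqP -> //; exact: ltW.
  have [y [y0 [y1 lt]]] := @improve R (fun a => p 0 a) (fun a => \sum_b A a b * q b 0) i i' p0 p1 (pi i) H.
  have S : SigmaA (\row_k y k).
    by split; [move=> k; rewrite mxE | under eq_bigr do rewrite mxE].
  have le := BRp (\row_k y k) S.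
  move: lt; rewrite ltNge -payoffA.
  suff -> : \sum_k y k * (\sum_b A k b * q b 0) = payoff (\row_k y k) A q by rewrite le.
  by rewrite payoffA; apply: eq_bigr => k _; rewrite mxE.
- move=> [[/= E _]|[_ [_ /= T1]]]; first by move: jj'; rewrite E eqxx.
  move=> [[/= E _]|[_ [_ /= T2]]]; first by move: jj'; rewrite E eqxx.
  right; split => //; split; first by apply/eqP; rewrite eq_sym.
  rewrite /= leNgt; apply/negP => T3.
  have H : \sum_a p 0 a * B a j < \sum_a p 0 a * B a j'.
    under eq_bigr do rewrite mulrC; under [X in _ < X]eq_bigr do rewrite mulrC.
    apply: (@dom_lt R (fun a => B a j) (fun a => B a j') (fun a => p 0 a) i'') => //.
    move=> a; case/or3P: (cover3 _ _ _ a ii' ii'' i'i'') => /eqP -> //; exact: ltW.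
  have [y [y0 [y1 lt]]] := @improve R (fun b => q b 0) (fun b => \sum_a p 0 a * B a b) j j' q0 q1 (qi j) H.
  have S : SigmaB (\col_k y k).
    by split; [move=> k; rewrite mxE | under eq_bigr do rewrite mxE].
  have le := BRq (\col_k y k) S.
  move: lt; rewrite ltNge -payoffB.
  suff -> : \sum_k y k * (\sum_a p 0 a * B a k) = payoff p B (\col_k y k) by rewrite le.
  by rewrite payoffB; apply: eq_bigr => k _; rewrite mxE.
Qed.
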